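(* Let $V$ be a real vector space and $C$ a cone in $V$. Assume $X_1,\dots,X_m,Y_1,\dots,Y_n$ are $C$-antichain-convex subsets of $V$, put $X=X_1+\dots+X_m$ and $Y=Y_1+\dots+Y_n$, and assume $X\cap Y=\emptyset$. (1) If $X_1$ is $C$-upward, then $\operatorname{co}(X)\cap\operatorname{co}(Y)=\emptyset$. (2) If $X_1$ is $C$-downward, then $\operatorname{co}(X)\cap\operatorname{co}(Y)=\emptyset$.
   Context: A cone in $V$ is a subset $C$ with $\lambda C\subseteq C$ for all $\lambda>0$ (possibly empty, need not contain $0$). $S\subseteq V$ is $C$-antichain-convex iff for all $x,y\in S$ and $\lambda\in[0,1]$ with $y-x\notin C\cup(-C)$ one has $\lambda x+(1-\lambda)y\in S$. $S$ is $C$-upward iff $S+C\subseteq S$; $C$-downward iff $S-C\subseteq S$. Sums are Minkowski sums; $\operatorname{co}$ denotes convex hull. *)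

(* Defs.v *)
From HB Require Import structures.
From mathcomp Require Import all_boot all_order all_algebra.
From mathcomp Require Import classical_sets reals.
Set Implicit Arguments. Unset Strict Implicit. Unset Printing Implicit Defensive.
Import Order.TTheory GRing.Theory Num.Theory.
Local Open Scope ring_scope.
Local Open Scope classical_set_scope.

Section Defs.
Variables (R : realType) (V : lmodType R).

(* A cone: closed under multiplication by positive scalars (may be empty, need not contain 0). *)
Definition is_cone (C : set V) : Prop :=
  forall (l : R) (x : V), 0 < l -> C x -> C (l *: x).

(* S is C-antichain-convex: for x,y in S with y - x not in C ∪ (-C), the segment [x,y] is in S.
   Note y - x ∈ -C  iff  x - y ∈ C. *)
Definition antichain_convex (C S : set V) : Prop :=
  forall (x y : V) (l : R), S x -> S y -> ~ C (y - x) -> ~ C (x - y) ->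
    0 <= l -> l <= 1 -> S (l *: x + (1 - l) *: y).

Definition upward (C S : set V) : Prop := forall x c, S x -> C c -> S (x + c).
Definition downward (C S : set V) : Prop := forall x c, S x -> C c -> S (x - c).

Definition msum (k : nat) (X : 'I_k -> set V) : set V :=
  [set v | exists f : 'I_k -> V, (forall i, X i (f i)) /\ v = \sum_(i < k) f i].

Definition conv_hull (A : set V) : set V :=
  [set v | exists (k : nat) (l : 'I_k -> R) (a : 'I_k -> V),
     (forall i, 0 <= l i) /\ \sum_(i < k) l i = 1 /\ (forall i, A (a i)) /\
     v = \sum_(i < k) l i *: a i].
End Defs.

(* Main.v *)
Require Import Defs.
From HB Require Import structures.
From mathcomp Require Import all_boot all_order all_algebra.
From mathcomp Require Import boolp classical_sets reals.
Import Order.TTheory GRing.Theory Num.Theory.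
Local Open Scope ring_scope.
Local Open Scope classical_set_scope.
Set Implicit Arguments. Unset Strict Implicit. Unset Printing Implicit Defensive.

Definition cvx (R : realType) (V : lmodType R) (W : set V) :=
  forall x y (l : R), W x -> W y -> 0 <= l -> l <= 1 -> W (l *: x + (1 - l) *: y).

Lemma cone_nn (R : realType) (V : lmodType R) (C : set V) c (t : R) :
  is_cone C -> C c -> 0 <= t -> C (t *: c) \/ t *: c = 0.
Proof.
move=> hC Cc; rewrite le_eqVlt => /orP[/eqP<-|t0].
  by right; rewrite scale0r.
by left; apply: hC.
Qed.

Lemma comb1 (R : realType) (V : lmodType R) (x y : V) (l : R) :
  l *: x + (1-l) *: y = x + (1-l) *: (y - x).
Proof.
rewrite scalerBr addrA addrAC; congr (_ + _).
by rewrite scalerBl scale1r opprB addrC subrK.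
Qed.

Lemma comb2 (R : realType) (V : lmodType R) (x y : V) (l : R) :
  l *: x + (1-l) *: y = y + l *: (x - y).
Proof.
have e : 1 - (1 - l) = l by rewrite opprB addrC subrK.
by rewrite addrC; have := comb1 y x (1 - l); rewrite e.
Qed.

Lemma upcvx (R : realType) (V : lmodType R) (C S : set V) :
  is_cone C -> upward C S -> antichain_convex C S -> cvx S.
Proof.
move=> hC hU hA x y l Sx Sy l0 l1.
have l1' : 0 <= 1 - l by rewrite subr_ge0.
have [Cyx|nyx] := pselect (C (y - x)).
  rewrite comb1.
  have [h|->] := cone_nn hC Cyx l1'; [exact: hU | by rewrite addr0].
have [Cxy|nxy] := pselect (C (x - y)).
  rewrite comb2.
  have [h|->] := cone_nn hC Cxy l0; [exact: hU | by rewrite addr0].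
by apply: hA.
Qed.

Lemma pw (R : realType) (V : lmodType R) (C A : set V) a a' (l : R) :
  is_cone C -> antichain_convex C A -> A a -> A a' -> 0 <= l -> l <= 1 ->
  exists be : V * V, A be.1 /\ (C be.2 \/ be.2 = 0) /\
    l *: a + (1 - l) *: a' = be.1 + be.2.
Proof.
move=> hC hA Aa Aa' l0 l1.
have l1' : 0 <= 1 - l by rewrite subr_ge0.
have [C1|n1] := pselect (C (a' - a)).
  by exists (a, (1 - l) *: (a' - a)); split => //=; split; [exact: cone_nn | exact: comb1].
have [C2|n2] := pselect (C (a - a')).
  by exists (a', l *: (a - a')); split => //=; split; [exact: cone_nn | exact: comb2].
exists (l *: a + (1 - l) *: a', 0); split => /=; first exact: hA.
by split; [right | rewrite addr0].
Qed.

Lemma pw2 (R : realType) (V : lmodType R) (C A : set V) a a' (l : R) :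
  is_cone C -> antichain_convex C A -> A a -> A a' -> 0 <= l -> l <= 1 ->
  exists be : V * V, A be.1 /\ (C be.2 \/ be.2 = 0) /\
    l *: a + (1 - l) *: a' = be.1 - be.2.
Proof.
move=> hC hA Aa Aa' l0 l1.
have l1' : 0 <= 1 - l by rewrite subr_ge0.
have [C1|n1] := pselect (C (a' - a)).
  exists (a', l *: (a' - a)); split => //=; split; first exact: cone_nn.
  by rewrite comb2 -scalerN opprB.
have [C2|n2] := pselect (C (a - a')).
  exists (a, (1 - l) *: (a - a')); split => //=; split; first exact: cone_nn.
  by rewrite comb1 -scalerN opprB.
exists (l *: a + (1 - l) *: a', 0); split => /=; first exact: hA.
by split; [right | rewrite subr0].
Qed.

Lemma up_sum (R : realType) (V : lmodType R) (C S : set V) k (e : 'I_k -> V) s :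
  upward C S -> S s -> (forall i, C (e i) \/ e i = 0) -> S (s + \sum_i e i).
Proof.
move=> uS Ss he; apply: (big_rec (fun x => S (s + x))); first by rewrite addr0.
move=> i x _ Sx; rewrite addrCA addrC.
by case: (he i) => [Ce|->]; [exact: uS | rewrite addr0].
Qed.

Definition Zset (R : realType) (V : lmodType R) (S : set V) k (A : 'I_k -> set V)
  p (B : 'I_p -> set V) : set V :=
  [set v | exists s (f : 'I_k -> V) (g : 'I_p -> V), S s /\ (forall i, A i (f i)) /\
     (forall j, B j (g j)) /\ v = s + \sum_i f i - \sum_j g j].

Lemma Zcvx (R : realType) (V : lmodType R) (C S : set V) k (A : 'I_k -> set V)
  p (B : 'I_p -> set V) :
  is_cone C -> cvx S -> upward C S -> (forall i, antichain_convex C (A i)) ->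
  (forall j, antichain_convex C (B j)) -> cvx (Zset S A B).
Proof.
move=> hC cS uS hA hB x y l [s [f [g [Ss [Af [Bg ->]]]]]]
  [s' [f' [g' [Ss' [Af' [Bg' ->]]]]]] l0 l1.
have [F hF] := choice (fun i => pw hC (hA i) (Af i) (Af' i) l0 l1).
have [G hG] := choice (fun j => pw2 hC (hB j) (Bg j) (Bg' j) l0 l1).
exists (l *: s + (1 - l) *: s' + \sum_i (F i).2 + \sum_j (G j).2).
exists (fun i => (F i).1), (fun j => (G j).1).
split.
  apply: (up_sum uS); last by move=> j; case: (hG j) => _ [].
  apply: (up_sum uS); last by move=> i; case: (hF i) => _ [].
  exact: cS.
split; first by move=> i; case: (hF i).
split; first by move=> j; case: (hG j).
have e1 : l *: \sum_i f i + (1 - l) *: \sum_i f' i = \sum_i (F i).1 + \sum_i (F i).2.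
  by rewrite !scaler_sumr -!big_split; apply: eq_bigr => i _ /=; case: (hF i) => _ [_ ->].
have e2 : l *: \sum_i g i + (1 - l) *: \sum_i g' i = \sum_i (G i).1 - \sum_i (G i).2.
  by rewrite !scaler_sumr -big_split -sumrB; apply: eq_bigr => i _ /=; case: (hG i) => _ [_ ->].
rewrite !scalerDr !scalerN addrACA [X in X + _]addrACA -opprD e1 e2 opprB.
rewrite !addrA; congr (_ - _); rewrite [RHS]addrAC; congr (_ + _).
by rewrite addrAC.
Qed.

Lemma hull_sub (R : realType) (V : lmodType R) (W A : set V) :
  cvx W -> A `<=` W -> conv_hull A `<=` W.
Proof.
move=> cW AW z [k [l [a [l0 [l1 [Aa ->]]]]]].
elim: k l a l0 l1 Aa => [|k IH] l a l0 l1 Aa.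
  by move: l1; rewrite big_ord0 => /esym/eqP; rewrite oner_eq0.
rewrite big_ord_recl in l1.
have hs : \sum_(i < k) l (lift ord0 i) = 1 - l ord0 by rewrite -l1 addrC addKr.
have hge : 0 <= \sum_(i < k) l (lift ord0 i) by apply: sumr_ge0 => i _.
have [e1|ne1] := eqVneq (l ord0) 1.
  have h0 : \sum_(i < k) l (lift ord0 i) = 0 by rewrite hs e1 subrr.
  have := psumr_eq0P (fun i _ => l0 (lift ord0 i)) h0 => hz.
  rewrite big_ord_recl big1 ?addr0 ?e1 ?scale1r; first exact: AW.
  by move=> i _; rewrite hz // scale0r.
have t0 : 1 - l ord0 != 0 by rewrite subr_eq0 eq_sym.
rewrite big_ord_recl.
have -> : \sum_(i < k) l (lift ord0 i) *: a (lift ord0 i) =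
    (1 - l ord0) *: \sum_(i < k) (l (lift ord0 i) / (1 - l ord0)) *: a (lift ord0 i).
  rewrite scaler_sumr; apply: eq_bigr => i _.
  by rewrite scalerA mulrC divfK.
apply: cW; [exact: AW | | exact: l0 | by rewrite -subr_ge0 -hs].
apply: IH => //.
- by move=> i; rewrite divr_ge0 // -hs.
- by rewrite -mulr_suml hs mulfV.
Qed.

Lemma cvx_shift (R : realType) (V : lmodType R) (W : set V) y :
  cvx W -> cvx [set x | W (x - y)].
Proof.
move=> cW x1 x2 l h1 h2 l0 l1 /=.
suff -> : l *: x1 + (1 - l) *: x2 - y = l *: (x1 - y) + (1 - l) *: (x2 - y).
  exact: cW.
have e : l + (1 - l) = 1 by rewrite addrC subrK.
by rewrite !scalerBr addrACA -opprD -scalerDl e scale1r.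
Qed.

Lemma cvx_refl (R : realType) (V : lmodType R) (W : set V) x :
  cvx W -> cvx [set y | W (x - y)].
Proof.
move=> cW y1 y2 l h1 h2 l0 l1 /=.
suff -> : x - (l *: y1 + (1 - l) *: y2) = l *: (x - y1) + (1 - l) *: (x - y2).
  exact: cW.
have e : l + (1 - l) = 1 by rewrite addrC subrK.
by rewrite !scalerBr addrACA -opprD -scalerDl e scale1r.
Qed.

Lemma part1 (R : realType) (V : lmodType R) (C : set V) (m n : nat)
  (X : 'I_m.+1 -> set V) (Y : 'I_n.+1 -> set V) :
  is_cone C ->
  (forall i, antichain_convex C (X i)) ->
  (forall j, antichain_convex C (Y j)) ->
  msum X `&` msum Y = set0 ->
  upward C (X ord0) -> conv_hull (msum X) `&` conv_hull (msum Y) = set0.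
Proof.
move=> hC hX hY hXY hU.
pose Z := Zset (X ord0) (fun i : 'I_m => X (lift ord0 i)) Y.
have cZ : cvx Z := Zcvx hC (upcvx hC hU (hX ord0)) hU (fun i => hX _) hY.
have XYZ : forall x y, msum X x -> msum Y y -> Z (x - y).
  move=> _ _ [f [Xf ->]] [g [Yg ->]].
  exists (f ord0), (fun i => f (lift ord0 i)), g.
  split => //; split => //; split => //.
  by rewrite big_ord_recl.
have ZX : forall y, msum Y y -> conv_hull (msum X) `<=` [set x | Z (x - y)].
  move=> y Yy; apply: hull_sub; first exact: cvx_shift.
  by move=> x Xx; exact: XYZ.
have ZY : forall x, conv_hull (msum X) x -> conv_hull (msum Y) `<=` [set y | Z (x - y)].
  move=> x Xx; apply: hull_sub; first exact: cvx_refl.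
  by move=> y Yy; exact: (ZX y Yy x Xx).
rewrite -subset0 => z [zX zY].
have := ZY z zX z zY; rewrite /= subrr => -[s [f [g [Ss [Xf [Yg e]]]]]].
have : (msum X `&` msum Y) (\sum_j g j); last by rewrite hXY.
split; last by exists g.
exists (fun i => match unlift ord0 i with Some j => f j | None => s end).
split.
  by move=> i; case: unliftP => [j ->|->].
rewrite [RHS]big_ord_recl /= unlift_none.
have -> : \sum_(i < m) match unlift ord0 (lift ord0 i) with Some j => f j | None => s end
    = \sum_(i < m) f i.
  apply: eq_bigr => i _; case: unliftP => [j /lift_inj -> //|].
  by move=> /eqP; rewrite eq_sym (negbTE (neq_lift _ _)).
by apply/eqP; rewrite eq_sym -subr_eq0 -e.
Qed.

Theorem corollary1 (R : realType) (V : lmodType R) (C : set V) (m n : nat)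
  (X : 'I_m.+1 -> set V) (Y : 'I_n.+1 -> set V) :
  is_cone C ->
  (forall i, antichain_convex C (X i)) ->
  (forall j, antichain_convex C (Y j)) ->
  msum X `&` msum Y = set0 ->
  (upward C (X ord0) -> conv_hull (msum X) `&` conv_hull (msum Y) = set0) /\
  (downward C (X ord0) -> conv_hull (msum X) `&` conv_hull (msum Y) = set0).
Proof.
move=> hC hX hY hXY; split; first exact: part1.
move=> hD.
have acN : forall S, antichain_convex C S -> antichain_convex [set v | C (- v)] S.
  move=> S hS x y l Sx Sy h1 h2 l0 l1; apply: hS => //.
    by move=> h; apply: h2; rewrite /= opprB.
  by move=> h; apply: h1; rewrite /= opprB.
apply: (part1 (C := [set v | C (- v)])) => //.
- by move=> l x l0 /= Cx; rewrite -scalerN; exact: hC.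
- by move=> i; exact: acN.
- by move=> j; exact: acN.
- by move=> x c Xx Cc; have := hD x (- c) Xx Cc; rewrite opprK.
Qed.
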